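(* Let a hinge $\Diamond_{ij;kl}$ (edge $e_{ij}$ with faces $f_{ijk},f_{ijl}$) carry radii $p,q,r,s>0$ at $v_k,v_i,v_l,v_j$ and inversive distances $a,b,c,d,e>1$ at $e_{ki},e_{il},e_{lj},e_{jk},e_{ij}$, and let the edge lengths be $u=\sqrt{p^2+q^2+2apq}$, $v=\sqrt{q^2+r^2+2bqr}$, $w=\sqrt{r^2+s^2+2crs}$, $x=\sqrt{s^2+p^2+2dsp}$, $y=\sqrt{q^2+s^2+2eqs}$. Suppose the faces $f_{ijk}$ (sides $u,x,y$) and $f_{ijl}$ (sides $v,w,y$) satisfy the triangle inequalities, develop the hinge into $\mathbb{E}^2$, and let $z=d_{\mathbb{E}}(v_k,v_l)$. Let $F=\frac{z^2-p^2-r^2}{2pr}$ and $f=\frac{ab+cd+ace+bde+\sqrt{\Delta_{ade}}\sqrt{\Delta_{bce}}}{e^2-1}$ with $\Delta_{xyz}=x^2+y^2+z^2+2xyz-1$, regarded as functions of the nine variables $p,q,r,s,a,b,c,d,e$. At any point where \[\frac{\sqrt{\Delta_{bce}}}{p}+\frac{\sqrt{\Delta_{ade}}}{r}=\frac{\sqrt{\Delta_{cdf}}}{q}+\frac{\sqrt{\Delta_{abf}}}{s}\] holds, we have $dF=df$. *)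

(* Defs.v *)
From Stdlib Require Import Reals.
From Coquelicot Require Import Coquelicot.
Open Scope R_scope.

Definition Delta (x y z : R) : R := x^2 + y^2 + z^2 + 2*x*y*z - 1.

Definition ivlen (r1 r2 I : R) : R := sqrt (r1^2 + r2^2 + 2*I*r1*r2).

Definition len_u p q (r s a b c d e : R) := ivlen p q a.
Definition len_v (p : R) q r (s a : R) b (c d e : R) := ivlen q r b.
Definition len_w (p q : R) r s (a b : R) c (d e : R) := ivlen r s c.
Definition len_x p (q r : R) s (a b c : R) d (e : R) := ivlen s p d.
Definition len_y (p : R) q (r : R) s (a b c d : R) e := ivlen q s e.

(* Development of the hinge into E^2: v_i = (0,0), v_j = (y,0),
   v_k = (xk, yk) with yk > 0 (|v_k v_i| = u, |v_k v_j| = x),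
   v_l = (xl, -yl) with yl > 0 (|v_l v_i| = v, |v_l v_j| = w),
   i.e. the two faces lie on opposite sides of the common edge e_ij. *)
Definition hinge_z (p q r s a b c d e : R) : R :=
  let u := len_u p q r s a b c d e in
  let v := len_v p q r s a b c d e in
  let w := len_w p q r s a b c d e in
  let x := len_x p q r s a b c d e in
  let y := len_y p q r s a b c d e in
  let xk := (u^2 + y^2 - x^2) / (2*y) in
  let yk := sqrt (u^2 - xk^2) in
  let xl := (v^2 + y^2 - w^2) / (2*y) in
  let yl := sqrt (v^2 - xl^2) in
  sqrt ((xk - xl)^2 + (yk - (- yl))^2).

Definition F_hinge (p q r s a b c d e : R) : R :=
  ((hinge_z p q r s a b c d e)^2 - p^2 - r^2) / (2*p*r).

Definition f_hinge (p q r s a b c d e : R) : R :=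
  (a*b + c*d + a*c*e + b*d*e + sqrt (Delta a d e) * sqrt (Delta b c e))
  / (e^2 - 1).

Definition hinge_admissible (p q r s a b c d e : R) : Prop :=
  let u := len_u p q r s a b c d e in
  let v := len_v p q r s a b c d e in
  let w := len_w p q r s a b c d e in
  let x := len_x p q r s a b c d e in
  let y := len_y p q r s a b c d e in
  0 < p /\ 0 < q /\ 0 < r /\ 0 < s /\
  1 < a /\ 1 < b /\ 1 < c /\ 1 < d /\ 1 < e /\
  u < x + y /\ x < u + y /\ y < u + x /\
  v < w + y /\ w < v + y /\ y < v + w.

Definition hinge_condition (p q r s a b c d e : R) : Prop :=
  let fv := f_hinge p q r s a b c d e in
  sqrt (Delta b c e) / p + sqrt (Delta a d e) / r
  = sqrt (Delta c d fv) / q + sqrt (Delta a b fv) / s.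

(* Main.v *)
Require Import Defs.
From Stdlib Require Import Reals Lra Psatz.
From Coquelicot Require Import Coquelicot.
Open Scope R_scope.
Local Notation DD := Defs.Delta.

Ltac cert c :=
  match goal with |- ?L = ?R =>
    let Z := fresh "Z" in assert (Z : L - R = c) by (ring || field);
    repeat (match goal with H : _ = 0 |- _ => rewrite H in Z end);
    lra end.

Definition xk9 p q r s a b c d e :=
  (len_u p q r s a b c d e ^2 + len_y p q r s a b c d e ^2 - len_x p q r s a b c d e ^2)
  / (2*len_y p q r s a b c d e).
Definition xl9 p q r s a b c d e :=
  (len_v p q r s a b c d e ^2 + len_y p q r s a b c d e ^2 - len_w p q r s a b c d e ^2)
  / (2*len_y p q r s a b c d e).
Definition Uk9 p q r s a b c d e := len_u p q r s a b c d e ^2 - xk9 p q r s a b c d e ^2.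
Definition Ul9 p q r s a b c d e := len_v p q r s a b c d e ^2 - xl9 p q r s a b c d e ^2.

Lemma hinge_z_eq p q r s a b c d e :
  hinge_z p q r s a b c d e =
  sqrt ((xk9 p q r s a b c d e - xl9 p q r s a b c d e)^2
        + (sqrt (Uk9 p q r s a b c d e) - - sqrt (Ul9 p q r s a b c d e))^2).
Proof. reflexivity. Qed.

Lemma ivlen_sq r1 r2 I : 0 < r1 -> 0 < r2 -> 1 < I -> ivlen r1 r2 I ^ 2 = r1^2 + r2^2 + 2*I*r1*r2.
Proof.
  intros. unfold ivlen. apply pow2_sqrt.
  assert (0 < I*r1*r2) by (apply Rmult_lt_0_compat; [apply Rmult_lt_0_compat|]; lra). nra.
Qed.

Lemma ivlen_pos r1 r2 I : 0 < r1 -> 0 < r2 -> 1 < I -> 0 < ivlen r1 r2 I.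
Proof.
  intros. unfold ivlen. apply sqrt_lt_R0.
  assert (0 < I*r1*r2) by (apply Rmult_lt_0_compat; [apply Rmult_lt_0_compat|]; lra). nra.
Qed.

Lemma coords p q r s a b c d e :
  0 < p -> 0 < q -> 0 < r -> 0 < s -> 1 < a -> 1 < b -> 1 < c -> 1 < d -> 1 < e ->
  0 <= Uk9 p q r s a b c d e -> 0 <= Ul9 p q r s a b c d e ->
  let xk := xk9 p q r s a b c d e in let yk := sqrt (Uk9 p q r s a b c d e) in
  let xl := xl9 p q r s a b c d e in let yl := sqrt (Ul9 p q r s a b c d e) in
  let y := len_y p q r s a b c d e in
  xk^2+yk^2-(p^2+q^2+2*a*p*q) = 0 /\
  (xk-y)^2+yk^2-(s^2+p^2+2*d*s*p) = 0 /\
  xl^2+yl^2-(q^2+r^2+2*b*q*r) = 0 /\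
  (xl-y)^2+yl^2-(r^2+s^2+2*c*r*s) = 0 /\
  y^2-(q^2+s^2+2*e*q*s) = 0 /\ 0 < y.
Proof.
  intros Hp Hq Hr Hs Ha Hb Hc Hd He Hk Hl xk yk xl yl y.
  assert (Hu := ivlen_sq p q a Hp Hq Ha).
  assert (Hv := ivlen_sq q r b Hq Hr Hb).
  assert (Hw := ivlen_sq r s c Hr Hs Hc).
  assert (Hx := ivlen_sq s p d Hs Hp Hd).
  assert (Hy := ivlen_sq q s e Hq Hs He).
  assert (Hy0 := ivlen_pos q s e Hq Hs He).
  assert (Hyk : yk^2 = Uk9 p q r s a b c d e) by (apply pow2_sqrt; auto).
  assert (Hyl : yl^2 = Ul9 p q r s a b c d e) by (apply pow2_sqrt; auto).
  unfold Uk9, Ul9 in *. fold xk in Hyk. fold xl in Hyl.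
  unfold len_u, len_v, len_w, len_x, len_y in *.
  assert (Hxk : xk * (2 * ivlen q s e) = ivlen p q a ^ 2 + ivlen q s e ^ 2 - ivlen s p d ^ 2).
  { unfold xk, xk9, len_u, len_y, len_x. field. lra. }
  assert (Hxl : xl * (2 * ivlen q s e) = ivlen q r b ^ 2 + ivlen q s e ^ 2 - ivlen r s c ^ 2).
  { unfold xl, xl9, len_v, len_y, len_w. field. lra. }
  unfold y. rewrite Hu, Hv, Hw, Hx, Hy in *.
  set (Y := ivlen q s e) in *.
  repeat split; try lra; nra.
Qed.


Definition Np a b c d e := a*b + c*d + a*c*e + b*d*e.
Definition gam a b c d e := 1 - e^2 - d^2 - c^2 - 2*b*c*e - b^2 + b^2*d^2 - 2*a*d*e - 2*a*b*c*d - a^2 + a^2*c^2.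
Definition Qp F a b c d e := (e^2-1)*F^2 - 2*Np a b c d e*F + gam a b c d e.

Lemma disc_id a b c d e : (Np a b c d e)^2 - (e^2-1)*gam a b c d e = DD a d e * DD b c e.
Proof. unfold Np, gam, Defs.Delta. ring. Qed.

Lemma Delta_pos x y z : 1 < x -> 1 < y -> 0 < z -> 0 < DD x y z.
Proof. intros. unfold Defs.Delta. assert (0 < x*y*z) by (apply Rmult_lt_0_compat; [apply Rmult_lt_0_compat|];lra). nra. Qed.

Lemma L2 p q r s a b c d e : 1 < a -> 1 < b -> 1 < c -> 1 < d -> 1 < e ->
  Qp (f_hinge p q r s a b c d e) a b c d e = 0.
Proof.
  intros. unfold f_hinge.
  assert (HD1 := Delta_pos a d e ltac:(lra) ltac:(lra) ltac:(lra)).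
  assert (HD2 := Delta_pos b c e ltac:(lra) ltac:(lra) ltac:(lra)).
  set (S1 := sqrt (DD a d e)). set (S2 := sqrt (DD b c e)).
  assert (E1 : S1 * S1 = DD a d e) by (apply sqrt_sqrt; lra).
  assert (E2 : S2 * S2 = DD b c e) by (apply sqrt_sqrt; lra).
  assert (He : e^2 - 1 <> 0) by nra.
  apply (Rmult_eq_reg_l ((e^2-1))); auto.
  rewrite Rmult_0_r.
  assert (Hd := disc_id a b c d e).
  unfold Qp. fold (Np a b c d e).
  replace (a * b + c * d + a * c * e + b * d * e) with (Np a b c d e) by (unfold Np; ring).
  field_simplify; auto.
  replace (S1 ^ 2 * S2 ^ 2) with (DD a d e * DD b c e) by (rewrite <- E1, <- E2; ring).
  rewrite <- Hd. field_simplify; auto. 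
Qed.

Definition det3 a11 a12 a13 a21 a22 a23 a31 a32 a33 : R :=
  a11*(a22*a33-a23*a32) - a12*(a21*a33-a23*a31) + a13*(a21*a32-a22*a31).
Definition det4 m11 m12 m13 m14 m21 m22 m23 m24 m31 m32 m33 m34 m41 m42 m43 m44 : R :=
  m11 * det3 m22 m23 m24 m32 m33 m34 m42 m43 m44
  - m12 * det3 m21 m23 m24 m31 m33 m34 m41 m43 m44
  + m13 * det3 m21 m22 m24 m31 m32 m34 m41 m42 m44
  - m14 * det3 m21 m22 m23 m31 m32 m33 m41 m42 m43.
Definition Bf x1 y1 z1 x2 y2 z2 : R := x1*x2 + y1*y2 - (z1+z2)/2.
Lemma gram x1 y1 z1 x2 y2 z2 x3 y3 z3 x4 y4 z4 :
  det4 (Bf x1 y1 z1 x1 y1 z1) (Bf x1 y1 z1 x2 y2 z2) (Bf x1 y1 z1 x3 y3 z3) (Bf x1 y1 z1 x4 y4 z4)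
       (Bf x2 y2 z2 x1 y1 z1) (Bf x2 y2 z2 x2 y2 z2) (Bf x2 y2 z2 x3 y3 z3) (Bf x2 y2 z2 x4 y4 z4)
       (Bf x3 y3 z3 x1 y1 z1) (Bf x3 y3 z3 x2 y2 z2) (Bf x3 y3 z3 x3 y3 z3) (Bf x3 y3 z3 x4 y4 z4)
       (Bf x4 y4 z4 x1 y1 z1) (Bf x4 y4 z4 x2 y2 z2) (Bf x4 y4 z4 x3 y3 z3) (Bf x4 y4 z4 x4 y4 z4)
  = - (det4 x1 y1 z1 1 x2 y2 z2 1 x3 y3 z3 1 x4 y4 z4 1)^2 / 4.
Proof. unfold det4, det3, Bf. field. Qed.

Lemma gram2 x1 y1 x2 y2 x3 y3 x4 y4 r1 r2 r3 r4 m12 m13 m14 m23 m24 m34 :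
  Bf x1 y1 (x1^2+y1^2-r1^2) x2 y2 (x2^2+y2^2-r2^2) = r1*r2*m12 ->
  Bf x1 y1 (x1^2+y1^2-r1^2) x3 y3 (x3^2+y3^2-r3^2) = r1*r3*m13 ->
  Bf x1 y1 (x1^2+y1^2-r1^2) x4 y4 (x4^2+y4^2-r4^2) = r1*r4*m14 ->
  Bf x2 y2 (x2^2+y2^2-r2^2) x3 y3 (x3^2+y3^2-r3^2) = r2*r3*m23 ->
  Bf x2 y2 (x2^2+y2^2-r2^2) x4 y4 (x4^2+y4^2-r4^2) = r2*r4*m24 ->
  Bf x3 y3 (x3^2+y3^2-r3^2) x4 y4 (x4^2+y4^2-r4^2) = r3*r4*m34 ->
  (r1*r2*r3*r4)^2 * det4 1 m12 m13 m14 m12 1 m23 m24 m13 m23 1 m34 m14 m24 m34 1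
  = - (det4 x1 y1 (x1^2+y1^2-r1^2) 1 x2 y2 (x2^2+y2^2-r2^2) 1
             x3 y3 (x3^2+y3^2-r3^2) 1 x4 y4 (x4^2+y4^2-r4^2) 1)^2 / 4.
Proof.
  intros H12 H13 H14 H23 H24 H34.
  rewrite <- gram.
  assert (Bs : forall a1 b1 c1 a2 b2 c2, Bf a1 b1 c1 a2 b2 c2 = Bf a2 b2 c2 a1 b1 c1)
    by (intros; unfold Bf; field).
  assert (Bd : forall a1 b1 r1, Bf a1 b1 (a1^2+b1^2-r1^2) a1 b1 (a1^2+b1^2-r1^2) = r1^2)
    by (intros; unfold Bf; field).
  rewrite !Bd.
  rewrite (Bs x2 y2 _ x1 y1 _), (Bs x3 y3 _ x1 y1 _), (Bs x4 y4 _ x1 y1 _),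
          (Bs x3 y3 _ x2 y2 _), (Bs x4 y4 _ x2 y2 _), (Bs x4 y4 _ x3 y3 _).
  rewrite H12, H13, H14, H23, H24, H34.
  unfold det4, det3. ring.
Qed.

Definition Wd9 p q r s a b c d e :=
  let xk := xk9 p q r s a b c d e in let yk := sqrt (Uk9 p q r s a b c d e) in
  let xl := xl9 p q r s a b c d e in let yl := sqrt (Ul9 p q r s a b c d e) in
  let y := len_y p q r s a b c d e in
  det4 xk yk (xk^2+yk^2-p^2) 1 0 0 (0^2+0^2-q^2) 1 xl (-yl) (xl^2+(-yl)^2-r^2) 1 y 0 (y^2+0^2-s^2) 1.

Lemma Qp_det F a b c d e :
  Qp F a b c d e = det4 1 (-a) (-F) (-d) (-a) 1 (-b) (-e) (-F) (-b) 1 (-c) (-d) (-e) (-c) 1.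
Proof. unfold Qp, Np, gam, det4, det3. ring. Qed.

Lemma L1 p q r s a b c d e :
  0 < p -> 0 < q -> 0 < r -> 0 < s -> 1 < a -> 1 < b -> 1 < c -> 1 < d -> 1 < e ->
  0 <= Uk9 p q r s a b c d e -> 0 <= Ul9 p q r s a b c d e ->
  Qp (F_hinge p q r s a b c d e) a b c d e * (p*q*r*s)^2 = - (Wd9 p q r s a b c d e)^2/4.
Proof.
  intros Hp Hq Hr Hs Ha Hb Hc Hd He Hk Hl.
  destruct (coords p q r s a b c d e Hp Hq Hr Hs Ha Hb Hc Hd He Hk Hl) as (E1 & E2 & E3 & E4 & E5 & Hy).
  unfold Wd9, F_hinge. rewrite hinge_z_eq.
  set (xk := xk9 p q r s a b c d e) in *. set (yk := sqrt (Uk9 p q r s a b c d e)) in *.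
  set (xl := xl9 p q r s a b c d e) in *. set (yl := sqrt (Ul9 p q r s a b c d e)) in *.
  set (y := len_y p q r s a b c d e) in *.
  rewrite pow2_sqrt by (apply Rplus_le_le_0_compat; apply pow2_ge_0).
  rewrite Qp_det, Rmult_comm.
  apply gram2; unfold Bf.
  - cert (-(1/2)*(xk^2+yk^2-(p^2+q^2+2*a*p*q))).
  - field; repeat split; lra.
  - cert (-(1/2)*((xk-y)^2+yk^2-(s^2+p^2+2*d*s*p))).
  - cert (-(1/2)*(xl^2+yl^2-(q^2+r^2+2*b*q*r))).
  - cert (-(1/2)*(y^2-(q^2+s^2+2*e*q*s))).
  - cert (-(1/2)*((xl-y)^2+yl^2-(r^2+s^2+2*c*r*s))).
Qed.
Lemma core p q r s a b c d e f xk yk xl yl y lk li lj :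
  xk^2+yk^2-(p^2+q^2+2*a*p*q) = 0 ->
  (xk-y)^2+yk^2-(s^2+p^2+2*d*s*p) = 0 ->
  xl^2+yl^2-(q^2+r^2+2*b*q*r) = 0 ->
  (xl-y)^2+yl^2-(r^2+s^2+2*c*r*s) = 0 ->
  y^2-(q^2+s^2+2*e*q*s) = 0 ->
  0 < y -> 0 < yk -> 0 <= yl ->
  p*lk - a*q*li + f*r - d*s*lj = 0 ->
  -a*p*lk + q*li + b*r - e*s*lj = 0 ->
  -f*p*lk - b*q*li - r - c*s*lj = 0 ->
  -d*p*lk - e*q*li + c*r + s*lj = 0 ->
  lk + li + lj - 1 = 0 ->
  lk < 0 ->
  (xk-xl)^2+(yk+yl)^2 = p^2+r^2+2*p*r*f.
Proof.
  intros E1 E2 E3 E4 E5 Hy Hyk Hyl Rk Ri Rl Rj HS Hlk.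
  assert (S1 : (lk*xk + lj*y)^2+(lk*yk)^2 - (q^2+r^2+2*b*q*r) = 0).
  { cert ((lk^2)*(xk^2+yk^2-(p^2+q^2+2*a*p*q))
      + lk*lj*((xk^2+yk^2-(p^2+q^2+2*a*p*q)) + (y^2-(q^2+s^2+2*e*q*s)) - ((xk-y)^2+yk^2-(s^2+p^2+2*d*s*p)))
      + lj^2*(y^2-(q^2+s^2+2*e*q*s))
      + p*lk*(p*lk - a*q*li + f*r - d*s*lj) + q*li*(-a*p*lk + q*li + b*r - e*s*lj)
      + s*lj*(-d*p*lk - e*q*li + c*r + s*lj) + r*(-f*p*lk - b*q*li - r - c*s*lj)
      + (lk + li + lj - 1)*(lk*(q^2+2*a*p*q) + li*(-q^2) + lj*(q^2+2*e*q*s))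
      + q^2*(lk + li + lj - 1) - 2*q*(-a*p*lk + q*li + b*r - e*s*lj)). }
  assert (S2 : 2*(lk*xk + lj*y)*y - (2*q^2+2*b*q*r+2*e*q*s-2*c*r*s) = 0).
  { cert (lk*((xk^2+yk^2-(p^2+q^2+2*a*p*q)) + (y^2-(q^2+s^2+2*e*q*s)) - ((xk-y)^2+yk^2-(s^2+p^2+2*d*s*p)))
      + 2*lj*(y^2-(q^2+s^2+2*e*q*s))
      + 2*(q^2+e*q*s)*(lk+li+lj-1) - 2*q*(-a*p*lk + q*li + b*r - e*s*lj) + 2*s*(-d*p*lk - e*q*li + c*r + s*lj)). }
  assert (S5 : (xk - (lk*xk + lj*y))^2 + (yk - lk*yk)^2 - (p^2+r^2+2*p*r*f) = 0).
  { cert ((1-2*lk)*(xk^2+yk^2-(p^2+q^2+2*a*p*q))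
      - lj*((xk^2+yk^2-(p^2+q^2+2*a*p*q)) + (y^2-(q^2+s^2+2*e*q*s)) - ((xk-y)^2+yk^2-(s^2+p^2+2*d*s*p)))
      + ((lk*xk + lj*y)^2+(lk*yk)^2 - (q^2+r^2+2*b*q*r))
      - 2*p*(p*lk - a*q*li + f*r - d*s*lj) + 2*q*(-a*p*lk + q*li + b*r - e*s*lj)
      - (2*q^2+2*a*p*q)*(lk + li + lj - 1)). }
  assert (HX : lk*xk + lj*y = xl).
  { assert (T : 2*xl*y - (2*q^2+2*b*q*r+2*e*q*s-2*c*r*s) = 0).
    { cert ((xl^2+yl^2-(q^2+r^2+2*b*q*r)) + (y^2-(q^2+s^2+2*e*q*s)) - ((xl-y)^2+yl^2-(r^2+s^2+2*c*r*s))). }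
    assert (T2 : (lk*xk + lj*y - xl) * y = 0) by lra.
    apply Rmult_integral in T2. destruct T2; lra. }
  assert (HY : lk*yk = - yl).
  { rewrite HX in S1.
    assert (T : (lk*yk + yl)*(lk*yk - yl) = 0) by lra.
    assert (lk*yk < 0) by nra.
    apply Rmult_integral in T. destruct T; lra. }
  rewrite HX, HY in S5. lra.
Qed.

Definition Ckk (F a b c d e : R) := 1 - e^2 - c^2 - 2*b*c*e - b^2.
Definition Cki (F a b c d e : R) := d*e + b*c*d + a - a*c^2 + F*c*e + F*b.
Definition Ckl (F a b c d e : R) := c*d + b*d*e + a*c*e + a*b + F - F*e^2.
Definition Ckj (F a b c d e : R) := d - b^2*d + a*e + a*b*c + F*c + F*b*e.

Lemma rowk F a b c d e : Ckk F a b c d e - a*Cki F a b c d e - F*Ckl F a b c d e - d*Ckj F a b c d e = Qp F a b c d e.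
Proof. unfold Ckk, Cki, Ckl, Ckj, Qp, Np, gam. ring. Qed.
Lemma rowi F a b c d e : -a*Ckk F a b c d e + Cki F a b c d e - b*Ckl F a b c d e - e*Ckj F a b c d e = 0.
Proof. unfold Ckk, Cki, Ckl, Ckj. ring. Qed.
Lemma rowl F a b c d e : -F*Ckk F a b c d e - b*Cki F a b c d e + Ckl F a b c d e - c*Ckj F a b c d e = 0.
Proof. unfold Ckk, Cki, Ckl, Ckj. ring. Qed.
Lemma rowj F a b c d e : -d*Ckk F a b c d e - e*Cki F a b c d e - c*Ckl F a b c d e + Ckj F a b c d e = 0.
Proof. unfold Ckk, Cki, Ckl, Ckj. ring. Qed.
Lemma jac_i F a b c d e : (Cki F a b c d e)^2 = DD b c e * DD c d F - Qp F a b c d e * (1 - c^2).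
Proof. unfold Ckk, Cki, Qp, Np, gam, Defs.Delta. ring. Qed.
Lemma jac_j F a b c d e : (Ckj F a b c d e)^2 = DD b c e * DD a b F - Qp F a b c d e * (1 - b^2).
Proof. unfold Ckk, Ckj, Qp, Np, gam, Defs.Delta. ring. Qed.

Lemma Uk_pos p q r s a b c d e : hinge_admissible p q r s a b c d e ->
  0 < Uk9 p q r s a b c d e /\ 0 < Ul9 p q r s a b c d e.
Proof.
  intro H. unfold hinge_admissible in H. cbv zeta in H.
  destruct H as (Hp & Hq & Hr & Hs & Ha & Hb & Hc & Hd & He & T1 & T2 & T3 & T4 & T5 & T6).
  unfold Uk9, Ul9, xk9, xl9.
  assert (Hu := ivlen_pos p q a Hp Hq Ha).
  assert (Hv := ivlen_pos q r b Hq Hr Hb).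
  assert (Hw := ivlen_pos r s c Hr Hs Hc).
  assert (Hx := ivlen_pos s p d Hs Hp Hd).
  assert (Hy := ivlen_pos q s e Hq Hs He).
  unfold len_u, len_v, len_w, len_x, len_y in *.
  set (u := ivlen p q a) in *. set (v := ivlen q r b) in *. set (w := ivlen r s c) in *.
  set (x := ivlen s p d) in *. set (y := ivlen q s e) in *.
  split.
  - assert (E : u^2 - ((u^2+y^2-x^2)/(2*y))^2 = ((x-u+y)*(x+u-y)*((u+y-x)*(u+y+x))) / (4*y^2))
      by (field; lra).
    rewrite E. apply Rdiv_lt_0_compat; [|nra].
    apply Rmult_lt_0_compat; apply Rmult_lt_0_compat; lra.
  - assert (E : v^2 - ((v^2+y^2-w^2)/(2*y))^2 = ((w-v+y)*(w+v-y)*((v+y-w)*(v+y+w))) / (4*y^2))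
      by (field; lra).
    rewrite E. apply Rdiv_lt_0_compat; [|nra].
    apply Rmult_lt_0_compat; apply Rmult_lt_0_compat; lra.
Qed.

Lemma L3 p q r s a b c d e : hinge_admissible p q r s a b c d e ->
  hinge_condition p q r s a b c d e ->
  F_hinge p q r s a b c d e = f_hinge p q r s a b c d e.
Proof.
  intros Hadm Hcond.
  destruct (Uk_pos _ _ _ _ _ _ _ _ _ Hadm) as [Hk Hl].
  unfold hinge_admissible in Hadm. cbv zeta in Hadm.
  destruct Hadm as (Hp & Hq & Hr & Hs & Ha & Hb & Hc & Hd & He & _).
  destruct (coords p q r s a b c d e Hp Hq Hr Hs Ha Hb Hc Hd He ltac:(lra) ltac:(lra)) as (E1 & E2 & E3 & E4 & E5 & Hy).
  unfold hinge_condition in Hcond. cbv zeta in Hcond.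
  assert (QF := L2 p q r s a b c d e Ha Hb Hc Hd He).
  set (f := f_hinge p q r s a b c d e) in *.
  assert (HD1 := Delta_pos a d e ltac:(lra) ltac:(lra) ltac:(lra)).
  assert (HD2 := Delta_pos b c e ltac:(lra) ltac:(lra) ltac:(lra)).
  set (S1 := sqrt (DD a d e)) in *. set (S2 := sqrt (DD b c e)) in *.
  assert (P1 : 0 < S1) by (apply sqrt_lt_R0; lra).
  assert (P2 : 0 < S2) by (apply sqrt_lt_R0; lra).
  assert (Q1 : S1 * S1 = DD a d e) by (apply sqrt_sqrt; lra).
  assert (Q2 : S2 * S2 = DD b c e) by (apply sqrt_sqrt; lra).
  assert (He2 : 0 < e^2 - 1) by nra.
  assert (Hf : f * (e^2-1) = Np a b c d e + S1*S2).
  { unfold f, f_hinge, Np. fold S1 S2. field. lra. }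
  assert (HN : a*c*e < Np a b c d e /\ b*d*e < Np a b c d e /\ 0 < a*c*e /\ 0 < b*d*e).
  { unfold Np. assert (0 < a*b) by nra. assert (0 < c*d) by nra.
    assert (0 < b*d*e) by (apply Rmult_lt_0_compat; nra).
    assert (0 < a*c*e) by (apply Rmult_lt_0_compat; nra). lra. }
  assert (HS12 : 0 < S1*S2) by nra.
  assert (Hfpos : 0 < f).
  { assert (0 < f*(e^2-1)) by (rewrite Hf; lra).
    apply (Rmult_lt_reg_r (e^2-1)); [lra | rewrite Rmult_0_l; lra]. }
  assert (Hfe1 : a*c < f*e).
  { assert (a*c*e < f*(e^2-1)) by lra.
    assert (a*c*e < f*e*e) by nra. 
    apply (Rmult_lt_reg_r e); nra. }
  assert (Hfe2 : b*d < f*e).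
  { assert (b*d*e < f*(e^2-1)) by lra.
    assert (b*d*e < f*e*e) by nra.
    apply (Rmult_lt_reg_r e); nra. }
  assert (HD3 := Delta_pos c d f ltac:(lra) ltac:(lra) Hfpos).
  assert (HD4 := Delta_pos a b f ltac:(lra) ltac:(lra) Hfpos).
  set (T1 := sqrt (DD c d f)) in *. set (T2 := sqrt (DD a b f)) in *.
  assert (HCkl : Ckl f a b c d e = - (S1*S2)).
  { unfold Ckl. unfold Np in Hf. lra. }
  assert (HCkk : Ckk f a b c d e = - (S2*S2)).
  { rewrite Q2. unfold Ckk, Defs.Delta. ring. }
  assert (HCki : Cki f a b c d e = S2*T1).
  { assert (pos : 0 < Cki f a b c d e).
    { unfold Cki. assert (f*c*e > a*c^2) by nra. assert (0 < d*e) by nra.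
      assert (0 < b*c*d) by (apply Rmult_lt_0_compat; nra). nra. }
    unfold S2, T1. rewrite <- sqrt_mult by lra.
    replace (DD b c e * DD c d f) with ((Cki f a b c d e)^2) by (rewrite jac_i, QF; ring).
    rewrite sqrt_pow2; lra. }
  assert (HCkj : Ckj f a b c d e = S2*T2).
  { assert (pos : 0 < Ckj f a b c d e).
    { unfold Ckj. assert (f*b*e > b^2*d) by nra. assert (0 < a*e) by nra.
      assert (0 < a*b*c) by (apply Rmult_lt_0_compat; nra). nra. }
    unfold S2, T2. rewrite <- sqrt_mult by lra.
    replace (DD b c e * DD a b f) with ((Ckj f a b c d e)^2) by (rewrite jac_j, QF; ring).
    rewrite sqrt_pow2; lra. }
  set (k := r/(S1*S2)).
  assert (Hkpos : 0 < k) by (unfold k; apply Rdiv_lt_0_compat; lra).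
  set (lk := k * Ckk f a b c d e / p).
  set (li := k * Cki f a b c d e / q).
  set (lj := k * Ckj f a b c d e / s).
  set (xk := xk9 p q r s a b c d e) in *. set (yk := sqrt (Uk9 p q r s a b c d e)) in *.
  set (xl := xl9 p q r s a b c d e) in *. set (yl := sqrt (Ul9 p q r s a b c d e)) in *.
  set (y := len_y p q r s a b c d e) in *.
  assert (Z := core p q r s a b c d e f xk yk xl yl y lk li lj E1 E2 E3 E4 E5 Hy).
  assert (Hrk : r = - (k * Ckl f a b c d e)).
  { rewrite HCkl. unfold k. field. lra. }
  assert (Z2 : (xk-xl)^2+(yk+yl)^2 = p^2+r^2+2*p*r*f).
  { apply Z.
    - apply sqrt_lt_R0; lra.
    - apply sqrt_pos.
    - transitivity (k * Qp f a b c d e).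
      + rewrite <- rowk. unfold lk, li, lj. rewrite Hrk at 1. field. lra.
      + rewrite QF. ring.
    - transitivity (k * 0).
      + rewrite <- (rowi f a b c d e). unfold lk, li, lj. rewrite Hrk at 1. field. lra.
      + ring.
    - transitivity (k * 0).
      + rewrite <- (rowl f a b c d e). unfold lk, li, lj. rewrite Hrk at 1. field. lra.
      + ring.
    - transitivity (k * 0).
      + rewrite <- (rowj f a b c d e). unfold lk, li, lj. rewrite Hrk at 1. field. lra.
      + ring.
    - unfold lk, li, lj, k. rewrite HCkk, HCki, HCkj.
      transitivity (r/S1 * (T1/q + T2/s - S2/p) - 1).
      + field. repeat split; lra.
      + rewrite <- Hcond. field. lra.
    - unfold lk. rewrite HCkk.
      assert (0 < k * (S2*S2) / p) by (apply Rdiv_lt_0_compat; nra). 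
      replace (k * - (S2 * S2) / p) with (- (k * (S2*S2) / p)) by (field; lra). lra. }
  unfold F_hinge. rewrite hinge_z_eq. fold xk xl yk yl.
  replace (yk - - yl) with (yk + yl) by ring.
  rewrite pow2_sqrt by (apply Rplus_le_le_0_compat; apply pow2_ge_0).
  rewrite Z2. field. lra.
Qed.

Ltac eta_fix := repeat match goal with |- context [fun x : R => ?f x] => change (fun x : R => f x) with f end.

Lemma ivarg_pos r1 r2 I : 0 < r1 -> 0 < r2 -> 1 < I -> 0 < r1*r1 + r2*r2 + 2*I*r1*r2.
Proof.
  intros. assert (0 < I*r1*r2) by (apply Rmult_lt_0_compat; [apply Rmult_lt_0_compat|]; lra). nra.
Qed.

Lemma loc_pos g : ex_derive g 0 -> 0 < g 0 -> locally 0 (fun t => 0 < g t).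
Proof.
  intros Hd Hg.
  apply ex_derive_continuous in Hd.
  apply Hd. exists (mkposreal _ Hg). intros y Hy. simpl in Hy.
  unfold ball in Hy; simpl in Hy. unfold AbsRing_ball, abs, minus, plus, opp in Hy; simpl in Hy.
  apply Rabs_def2 in Hy. lra.
Qed.

Lemma loc_lin x h : 0 < x -> locally 0 (fun t => 0 < x + t*h).
Proof.
  intros Hx. apply (loc_pos (fun t => x + t*h)).
  - auto_derive. auto.
  - rewrite Rmult_0_l, Rplus_0_r. exact Hx.
Qed.

Lemma loc_lin1 x h : 1 < x -> locally 0 (fun t => 1 < x + t*h).
Proof.
  intros Hx. apply (filter_imp (fun t => 0 < (x-1) + t*h)).
  - intros t H. lra.
  - apply loc_lin. lra.
Qed.

Theorem lemma5p4 (p q r s a b c d e : R) :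
  hinge_admissible p q r s a b c d e ->
  hinge_condition p q r s a b c d e ->
  forall hp hq hr hs ha hb hc hd he : R,
    exists l : R,
      is_derive (fun t => F_hinge (p + t*hp) (q + t*hq) (r + t*hr) (s + t*hs)
                          (a + t*ha) (b + t*hb) (c + t*hc) (d + t*hd) (e + t*he)) 0 l /\
      is_derive (fun t => f_hinge (p + t*hp) (q + t*hq) (r + t*hr) (s + t*hs)
                          (a + t*ha) (b + t*hb) (c + t*hc) (d + t*hd) (e + t*he)) 0 l.
Proof.
  intros Hadm Hcond hp hq hr hs ha hb hc hd he.
  assert (Hadm' := Hadm).
  destruct (Uk_pos _ _ _ _ _ _ _ _ _ Hadm) as [HUk HUl].
  assert (HFf := L3 _ _ _ _ _ _ _ _ _ Hadm Hcond).
  unfold hinge_admissible in Hadm'; cbv zeta in Hadm'.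
  destruct Hadm' as (Hp & Hq & Hr & Hs & Ha & Hb & Hc & Hd & He & _).
  pose (lut := fun t => len_u (p+t*hp) (q+t*hq) (r+t*hr) (s+t*hs) (a+t*ha) (b+t*hb) (c+t*hc) (d+t*hd) (e+t*he)).
  pose (lvt := fun t => len_v (p+t*hp) (q+t*hq) (r+t*hr) (s+t*hs) (a+t*ha) (b+t*hb) (c+t*hc) (d+t*hd) (e+t*he)).
  pose (lwt := fun t => len_w (p+t*hp) (q+t*hq) (r+t*hr) (s+t*hs) (a+t*ha) (b+t*hb) (c+t*hc) (d+t*hd) (e+t*he)).
  pose (lxt := fun t => len_x (p+t*hp) (q+t*hq) (r+t*hr) (s+t*hs) (a+t*ha) (b+t*hb) (c+t*hc) (d+t*hd) (e+t*he)).
  pose (lyt := fun t => len_y (p+t*hp) (q+t*hq) (r+t*hr) (s+t*hs) (a+t*ha) (b+t*hb) (c+t*hc) (d+t*hd) (e+t*he)).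
  pose (xkt := fun t => (lut t ^2 + lyt t ^2 - lxt t ^2)/(2*lyt t)).
  pose (xlt := fun t => (lvt t ^2 + lyt t ^2 - lwt t ^2)/(2*lyt t)).
  pose (ukt := fun t => lut t ^2 - xkt t ^2).
  pose (ult := fun t => lvt t ^2 - xlt t ^2).
  pose (Fh := fun t => ((sqrt ((xkt t - xlt t)^2 + (sqrt (ukt t) - - sqrt (ult t))^2))^2
                         - (p+t*hp)^2 - (r+t*hr)^2) / (2*(p+t*hp)*(r+t*hr))).
  pose (fh := fun t => f_hinge (p+t*hp) (q+t*hq) (r+t*hr) (s+t*hs) (a+t*ha) (b+t*hb) (c+t*hc) (d+t*hd) (e+t*he)).
  pose (Wt := fun t => det4 (xkt t) (sqrt (ukt t)) (xkt t ^2 + sqrt (ukt t) ^2 - (p+t*hp)^2) 1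
                          0 0 (0^2+0^2-(q+t*hq)^2) 1
                          (xlt t) (- sqrt (ult t)) (xlt t ^2 + (- sqrt (ult t))^2 - (r+t*hr)^2) 1
                          (lyt t) 0 (lyt t ^2 + 0^2 - (s+t*hs)^2) 1).
  assert (EF : forall t, F_hinge (p+t*hp) (q+t*hq) (r+t*hr) (s+t*hs) (a+t*ha) (b+t*hb) (c+t*hc) (d+t*hd) (e+t*he) = Fh t) by (intro; reflexivity).
  assert (EW : forall t, Wd9 (p+t*hp) (q+t*hq) (r+t*hr) (s+t*hs) (a+t*ha) (b+t*hb) (c+t*hc) (d+t*hd) (e+t*he) = Wt t) by (intro; reflexivity).
  assert (EUk : forall t, Uk9 (p+t*hp) (q+t*hq) (r+t*hr) (s+t*hs) (a+t*ha) (b+t*hb) (c+t*hc) (d+t*hd) (e+t*he) = ukt t) by (intro; reflexivity).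
  assert (EUl : forall t, Ul9 (p+t*hp) (q+t*hq) (r+t*hr) (s+t*hs) (a+t*ha) (b+t*hb) (c+t*hc) (d+t*hd) (e+t*he) = ult t) by (intro; reflexivity).
  assert (Z0 : forall v h, v + 0*h = v) by (intros; ring).
  assert (uk0 : ukt 0 = Uk9 p q r s a b c d e) by (rewrite <- EUk, !Z0; reflexivity).
  assert (ul0 : ult 0 = Ul9 p q r s a b c d e) by (rewrite <- EUl, !Z0; reflexivity).
  assert (F0 : Fh 0 = F_hinge p q r s a b c d e) by (rewrite <- EF, !Z0; reflexivity).
  assert (f0 : fh 0 = f_hinge p q r s a b c d e) by (unfold fh; rewrite !Z0; reflexivity).
  assert (ly0 : lyt 0 = len_y p q r s a b c d e) by (unfold lyt; rewrite !Z0; reflexivity).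
  assert (Hly0 : 0 < lyt 0) by (rewrite ly0; apply ivlen_pos; lra).
  assert (dlu : ex_derive lut 0).
  { unfold lut, len_u, ivlen. auto_derive. rewrite !Z0, !Rmult_1_r. apply ivarg_pos; lra. }
  assert (dlv : ex_derive lvt 0).
  { unfold lvt, len_v, ivlen. auto_derive. rewrite !Z0, !Rmult_1_r. apply ivarg_pos; lra. }
  assert (dlw : ex_derive lwt 0).
  { unfold lwt, len_w, ivlen. auto_derive. rewrite !Z0, !Rmult_1_r. apply ivarg_pos; lra. }
  assert (dlx : ex_derive lxt 0).
  { unfold lxt, len_x, ivlen. auto_derive. rewrite !Z0, !Rmult_1_r. apply ivarg_pos; lra. }
  assert (dly : ex_derive lyt 0).
  { unfold lyt, len_y, ivlen. auto_derive. rewrite !Z0, !Rmult_1_r. apply ivarg_pos; lra. }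
  assert (dxk : ex_derive xkt 0).
  { unfold xkt. auto_derive. repeat split; auto; lra. }
  assert (dxl : ex_derive xlt 0).
  { unfold xlt. auto_derive. repeat split; auto; lra. }
  assert (duk : ex_derive ukt 0) by (unfold ukt; auto_derive; repeat split; auto).
  assert (dul : ex_derive ult 0) by (unfold ult; auto_derive; repeat split; auto).
  assert (HUk0 : 0 < ukt 0) by (rewrite uk0; exact HUk).
  assert (HUl0 : 0 < ult 0) by (rewrite ul0; exact HUl).
  assert (dFh : ex_derive Fh 0).
  { unfold Fh. auto_derive. repeat split; auto.
     - assert (0 < sqrt (ukt 0)) by (apply sqrt_lt_R0; exact HUk0).
       assert (0 <= sqrt (ult 0)) by apply sqrt_pos.
       rewrite ?Rmult_1_r, Ropp_involutive.
       assert (0 < (sqrt (ukt 0) + sqrt (ult 0)) * (sqrt (ukt 0) + sqrt (ult 0)))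
         by (apply Rmult_lt_0_compat; lra).
       assert (0 <= (xkt 0 + - xlt 0) * (xkt 0 + - xlt 0)) by exact (Rle_0_sqr _).
       lra.
     - rewrite !Z0. apply Rmult_integral_contrapositive; split; [|lra].
       apply Rmult_integral_contrapositive; split; lra. }
  assert (dfh : ex_derive fh 0).
  { unfold fh, f_hinge, Defs.Delta. auto_derive. rewrite !Z0, !Rmult_1_r.
     assert (D1 := Delta_pos a d e ltac:(lra) ltac:(lra) ltac:(lra)).
     assert (D2 := Delta_pos b c e ltac:(lra) ltac:(lra) ltac:(lra)).
     unfold Defs.Delta in D1, D2. simpl in D1, D2. rewrite !Rmult_1_r in D1, D2.
     repeat split; try lra; nra. }
  assert (dW : ex_derive Wt 0).
  { unfold Wt, det4, det3. auto_derive. repeat split; auto. }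
  assert (Lpos : locally 0 (fun t => 0 < p+t*hp /\ 0 < q+t*hq /\ 0 < r+t*hr /\ 0 < s+t*hs /\ 1 < a+t*ha /\ 1 < b+t*hb /\ 1 < c+t*hc /\ 1 < d+t*hd /\ 1 < e+t*he /\ 0 < ukt t /\ 0 < ult t)).
  { repeat apply filter_and; try (apply loc_lin; lra); try (apply loc_lin1; lra);
     apply loc_pos; auto. }
  pose (qf := fun t => Qp (Fh t) (a+t*ha) (b+t*hb) (c+t*hc) (d+t*hd) (e+t*he)).
  pose (kf := fun t => Qp (fh t) (a+t*ha) (b+t*hb) (c+t*hc) (d+t*hd) (e+t*he)).
  pose (pit := fun t => ((p+t*hp)*(q+t*hq)*(r+t*hr)*(s+t*hs))^2).
  assert (LQ : locally 0 (fun t => - (Wt t)^2/4 = qf t * pit t)).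
  { eapply filter_imp; [|exact Lpos]. intros t H.
     destruct H as (H1 & H2 & H3 & H4 & H5 & H6 & H7 & H8 & H9 & H10 & H11).
     unfold qf, pit. rewrite <- EF, <- EW. symmetry. apply L1; auto; try (rewrite EUk; lra); try (rewrite EUl; lra). }
  assert (LK : locally 0 (fun t => 0 = kf t)).
  { eapply filter_imp; [|exact Lpos]. intros t H.
     destruct H as (H1 & H2 & H3 & H4 & H5 & H6 & H7 & H8 & H9 & H10 & H11).
     unfold kf, fh. symmetry. apply L2; auto. }
  assert (HF0f0 : Fh 0 = fh 0) by (rewrite F0, f0; exact HFf).
  assert (q0 : qf 0 = 0).
  { unfold qf. rewrite HF0f0, f0, !Z0. apply L2; auto. }
  assert (W0 : Wt 0 = 0).
  { assert (H := locally_singleton _ _ LQ). simpl in H. rewrite q0, Rmult_0_l in H. nra. }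
  assert (dpi : ex_derive pit 0) by (unfold pit; auto_derive; auto).
  assert (HR : is_derive (fun t => - (Wt t)^2/4) 0 0).
  { auto_derive; [repeat split; auto | rewrite W0; ring]. }
  assert (HL : is_derive (fun t => qf t * pit t) 0 0) by exact (is_derive_ext_loc _ _ 0 0 LQ HR).
  assert (dq : ex_derive qf 0).
  { unfold qf, Qp, Np, gam. auto_derive. repeat split; auto. }
  assert (HL2 : is_derive (fun t => qf t * pit t) 0 (Derive qf 0 * pit 0)).
  { auto_derive; [repeat split; auto | rewrite q0; eta_fix; ring]. }
  assert (pit0 : 0 < pit 0).
  { unfold pit. rewrite !Z0. apply pow_lt.
     repeat apply Rmult_lt_0_compat; lra. }
  assert (Dq0 : Derive qf 0 = 0).
  { assert (U := is_derive_unique _ _ _ HL). assert (U2 := is_derive_unique _ _ _ HL2).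
     rewrite U in U2. apply (Rmult_eq_reg_r (pit 0)); lra. }
  assert (Hqd : is_derive qf 0 0) by (assert (H := Derive_correct _ _ dq); rewrite Dq0 in H; exact H).
  assert (Hkd : is_derive kf 0 0) by exact (is_derive_ext_loc _ _ 0 0 LK (is_derive_const 0 0)).
  assert (Dk0 : Derive kf 0 = 0) by (apply is_derive_unique; exact Hkd).
  assert (dk : ex_derive kf 0) by (exists 0; exact Hkd).
  assert (Hdd : is_derive (fun t => qf t - kf t) 0 0).
  { auto_derive; [repeat split; auto | eta_fix; rewrite Dq0, Dk0; ring]. }
  assert (Ident : forall t, qf t - kf t = (Fh t - fh t) *
            (((e+t*he)^2-1)*(Fh t + fh t) - 2*Np (a+t*ha) (b+t*hb) (c+t*hc) (d+t*hd) (e+t*he))).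
  { intro t. unfold qf, kf, Qp. ring. }
  assert (Hd2 : is_derive (fun t => (Fh t - fh t) * (((e+t*he)^2-1)*(Fh t + fh t) - 2*Np (a+t*ha) (b+t*hb) (c+t*hc) (d+t*hd) (e+t*he))) 0 0)
    by exact (is_derive_ext _ _ 0 0 Ident Hdd).
  assert (Hd3 : is_derive (fun t => (Fh t - fh t) * (((e+t*he)^2-1)*(Fh t + fh t) - 2*Np (a+t*ha) (b+t*hb) (c+t*hc) (d+t*hd) (e+t*he))) 0
            ((Derive Fh 0 - Derive fh 0) * ((e^2-1)*(2*fh 0) - 2*Np a b c d e))).
  { unfold Np. auto_derive; [repeat split; auto | rewrite HF0f0, !Z0; eta_fix; ring]. }
  assert (G0 : 0 < (e^2-1)*(2*fh 0) - 2*Np a b c d e).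
  { rewrite f0. unfold f_hinge, Np.
     assert (D1 := Delta_pos a d e ltac:(lra) ltac:(lra) ltac:(lra)).
     assert (D2 := Delta_pos b c e ltac:(lra) ltac:(lra) ltac:(lra)).
     assert (0 < sqrt (DD a d e) * sqrt (DD b c e))
       by (apply Rmult_lt_0_compat; apply sqrt_lt_R0; lra).
     assert (He2 : e^2 - 1 <> 0) by nra.
     replace ((e ^ 2 - 1) * (2 * ((a * b + c * d + a * c * e + b * d * e +
        sqrt (DD a d e) * sqrt (DD b c e)) / (e ^ 2 - 1))) - 2 * (a * b + c * d + a * c * e + b * d * e))
       with (2 * (sqrt (DD a d e) * sqrt (DD b c e))) by (field; exact He2).
     lra. }
  assert (DFf : Derive Fh 0 = Derive fh 0).
  { assert (U := is_derive_unique _ _ _ Hd2). assert (U2 := is_derive_unique _ _ _ Hd3).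
     rewrite U in U2.
     assert (T : (Derive Fh 0 - Derive fh 0) * ((e^2-1)*(2*fh 0) - 2*Np a b c d e) = 0) by lra.
     apply Rmult_integral in T. destruct T; lra. }
  exists (Derive fh 0). split.
  - apply (is_derive_ext Fh). { intro t. symmetry. apply EF. }
    rewrite <- DFf. apply Derive_correct. exact dFh.
  - apply Derive_correct. exact dfh.
Qed.
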